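(* Let $N\ge3$, $\mu\ge0$, let $K$ satisfy (K$\infty$) and $f$ satisfy (F$\infty$), and let $p>p_S(\beta)$. Let $t_1\in\mathbb{R}$ and let $\tilde w\in C^2(t_1,\infty)$ be a positive solution of $$\tilde w''+\tilde a\tilde w'-\tilde A^{p-1}\tilde w+\tilde L(t)\tilde w^p+\mu\tilde g(t)=0\quad(t>t_1)$$ with $0<\limsup_{t\to\infty}\tilde w(t)<\infty$. Then $\lim_{t\to\infty}\tilde w(t)=\tilde\gamma$ and $\lim_{t\to\infty}\tilde w'(t)=0$.
   Context: (K$\infty$): $K:(0,\infty)\to(0,\infty)$ is continuous and $K(r)=(k_\infty+o(1))r^{\beta}$ as $r\to\infty$ for some $\beta>-2$, $k_\infty>0$. (F$\infty$): $f:(0,\infty)\to[0,\infty)$ is continuous and $f(r)=O(r^{-q})$ as $r\to\infty$ for some $q>N$. $p_S(\beta)=\frac{N+2+2\beta}{N-2}$, $\tilde\theta:=\frac{2+\beta}{p-1}$, $\tilde c:=N-2-\tilde\theta$, $\tilde a:=N-2-2\tilde\theta$, $\tilde A:=(\tilde\theta\tilde c)^{1/(p-1)}$, $\tilde\gamma:=k_\infty^{-1/(p-1)}\tilde A$, $\tilde L(t):=e^{-\beta t}K(e^t)$, $\tilde g(t):=e^{(2+\tilde\theta)t}f(e^t)$. (This equation is satisfied by $\tilde w(t)=e^{\tilde\theta t}u(e^t)$ when $u$ solves $u''+\frac{N-1}{r}u'+K(r)u^p+\mu f(r)=0$.) *)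

(* Defs.v *)
From Stdlib Require Import Reals.
From Coquelicot Require Import Coquelicot.
Open Scope R_scope.

Definition K_infty (K : R -> R) (beta k_inf : R) : Prop :=
  beta > -2 /\ k_inf > 0 /\
  (forall r, 0 < r -> 0 < K r /\ continuous K r) /\
  (forall eps, eps > 0 -> exists R0, forall r, r > R0 -> r > 0 ->
      Rabs (K r / Rpower r beta - k_inf) <= eps).

Definition F_infty (N : nat) (f : R -> R) : Prop :=
  (forall r, 0 < r -> 0 <= f r /\ continuous f r) /\
  exists q, q > INR N /\
    exists C R0, forall r, r > R0 -> r > 0 -> Rabs (f r) <= C * Rpower r (- q).

Definition p_S (N : nat) (beta : R) : R := (INR N + 2 + 2 * beta) / (INR N - 2).

Definition theta_t (beta p : R) : R := (2 + beta) / (p - 1).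
Definition c_t (N : nat) (beta p : R) : R := INR N - 2 - theta_t beta p.
Definition a_t (N : nat) (beta p : R) : R := INR N - 2 - 2 * theta_t beta p.
Definition A_t (N : nat) (beta p : R) : R :=
  Rpower (theta_t beta p * c_t N beta p) (1 / (p - 1)).
Definition gamma_t (N : nat) (beta p k_inf : R) : R :=
  Rpower k_inf (- (1 / (p - 1))) * A_t N beta p.
Definition L_t (K : R -> R) (beta t : R) : R := exp (- beta * t) * K (exp t).
Definition g_t (f : R -> R) (beta p t : R) : R :=
  exp ((2 + theta_t beta p) * t) * f (exp t).

Definition limsup_pos_finite (w : R -> R) : Prop :=
  (exists M T, forall t, t > T -> w t <= M) /\
  (exists c, c > 0 /\ forall T, exists t, t > T /\ w t >= c).

(* Main.v *)
Require Import Defs.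
From Stdlib Require Import Reals Lra Classical.
From Coquelicot Require Import Coquelicot.
Open Scope R_scope.


Definition ctn (f : R -> R) (x : R) : Prop :=
  forall eps, eps > 0 -> exists d, d > 0 /\ forall y, Rabs (y - x) < d -> Rabs (f y - f x) < eps.

Lemma continuous_ctn f x : continuous f x -> ctn f x.
Proof.
  intros H eps He.
  assert (Hc : continuity_pt f x) by (apply continuity_pt_filterlim; exact H).
  rewrite continuity_pt_locally in Hc.
  destruct (Hc (mkposreal eps He)) as [d Hd].
  exists d; split; [apply cond_pos|].
  intros y Hy. apply (Hd y). exact Hy.
Qed.

Lemma ctn_continuity_pt f x : ctn f x -> continuity_pt f x.
Proof.
  intros H. apply continuity_pt_locally. intros eps.
  destruct (H eps (cond_pos eps)) as [d [Hd Hy]].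
  exists (mkposreal d Hd). intros y Hb. apply Hy. exact Hb.
Qed.

Lemma derive_ctn (f : R -> R) (x l : R) : is_derive f x l -> ctn f x.
Proof.
  intros H. apply continuous_ctn. apply (@ex_derive_continuous R_AbsRing R_NormedModule f x). exists l; exact H.
Qed.

Lemma ctn_max f g x : ctn f x -> ctn g x -> ctn (fun u => Rmax (f u) (g u)) x.
Proof.
  intros Hf Hg eps He.
  destruct (Hf eps He) as [d1 [Hd1 H1]]. destruct (Hg eps He) as [d2 [Hd2 H2]].
  exists (Rmin d1 d2); split. apply Rmin_pos; auto.
  intros y Hy. assert (A1 := H1 y ltac:(apply Rlt_le_trans with (1:=Hy); apply Rmin_l)).
  assert (A2 := H2 y ltac:(apply Rlt_le_trans with (1:=Hy); apply Rmin_r)).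
  revert A1 A2. unfold Rmax. repeat destruct Rle_dec; intros A1 A2;
  apply Rabs_def1; apply Rabs_def2 in A1; apply Rabs_def2 in A2; lra.
Qed.

Lemma ctn_minus_abs f c x : ctn f x -> ctn (fun u => Rabs (f u - c)) x.
Proof.
  intros Hf eps He. destruct (Hf eps He) as [d [Hd H1]]. exists d; split; auto.
  intros y Hy. specialize (H1 y Hy).
  apply Rle_lt_trans with (2 := H1).
  apply Rle_trans with (Rabs ((f y - c) - (f x - c))).
  apply Rabs_triang_inv2.
  right; f_equal; ring.
Qed.

Lemma ctn_affine f c1 c2 x : ctn f x -> ctn (fun u => c1 + c2 * f u) x.
Proof.
  intros Hf eps He.
  destruct (Hf (eps / (Rabs c2 + 1))) as [d [Hd H1]].
  { apply Rdiv_lt_0_compat; auto. pose proof (Rabs_pos c2); lra. }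
  exists d; split; auto. intros y Hy. specialize (H1 y Hy).
  replace (c1 + c2 * f y - (c1 + c2 * f x)) with (c2 * (f y - f x)) by ring.
  rewrite Rabs_mult. pose proof (Rabs_pos c2). pose proof (Rabs_pos (f y - f x)).
  apply Rmult_lt_compat_r with (r := Rabs c2 + 1) in H1; [|lra].
  unfold Rdiv in H1. rewrite Rmult_assoc, Rinv_l in H1 by lra. nra.
Qed.

Lemma ctn_refl f x : ctn f (- x) -> ctn (fun u => f (- u)) x.
Proof.
  intros Hf eps He. destruct (Hf eps He) as [d [Hd H1]]. exists d; split; auto.
  intros y Hy. apply H1. replace (- y - - x) with (- (y - x)) by ring. rewrite Rabs_Ropp. auto.
Qed.

Lemma first_time (phi : R -> R) s t : s < t -> (forall u, s <= u <= t -> ctn phi u) ->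
  phi s < 0 -> 0 <= phi t ->
  exists ts, s < ts <= t /\ phi ts = 0 /\ forall u, s <= u < ts -> phi u < 0.
Proof.
  intros Hst Hc Hs Ht.
  set (E := fun u => s <= u <= t /\ forall v, s <= v <= u -> phi v < 0).
  assert (Hb : bound E) by (exists t; intros x [Hx _]; lra).
  assert (He : exists x, E x) by (exists s; split; [lra| intros v Hv; replace v with s by lra; auto]).
  destruct (completeness E Hb He) as [m [Hub Hlub]].
  assert (Hsm : s <= m) by (apply Hub; destruct He; unfold E; split; [lra|]; intros v Hv; replace v with s by lra; auto).
  assert (Hmt : m <= t) by (apply Hlub; intros x [Hx _]; lra).
  assert (P1 : forall u, s <= u < m -> phi u < 0).
  { intros u Hu. destruct (classic (exists x, E x /\ u < x)) as [[x [[Hx1 Hx2] Hux]]|Hn].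
    - apply Hx2; lra.
    - exfalso. assert (m <= u); [|lra]. apply Hlub. intros x Ex.
      destruct (Rle_dec x u); auto. exfalso; apply Hn; exists x; split; auto; lra. }
  assert (P2 : 0 <= phi m).
  { destruct (Rle_dec 0 (phi m)) as [|Hneg]; auto. exfalso.
    assert (Hmt' : m < t) by (destruct (Req_dec m t); [subst; lra| lra]).
    destruct (Hc m ltac:(lra) (- phi m) ltac:(lra)) as [d [Hd Hdd]].
    set (m' := Rmin (m + d/2) t).
    assert (Em' : E m').
    { split. unfold m'. split. apply Rmin_glb; lra. apply Rmin_r.
      intros v Hv. destruct (Rlt_dec v m). apply P1; lra.
      assert (Rabs (v - m) < d).
      { rewrite Rabs_right by lra. assert (v <= m + d/2) by (apply Rle_trans with m'; [lra| apply Rmin_l]). lra. }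
      specialize (Hdd v H). apply Rabs_def2 in Hdd. lra. }
    assert (m' <= m) by (apply Hub; auto).
    assert (m < m') by (unfold m'; apply Rmin_glb_lt; lra). lra. }
  assert (P3 : phi m <= 0).
  { destruct (Rle_dec (phi m) 0) as [|Hpos]; auto. exfalso.
    assert (Hsm' : s < m) by (destruct (Req_dec s m); [subst; lra| lra]).
    destruct (Hc m ltac:(lra) (phi m) ltac:(lra)) as [d [Hd Hdd]].
    set (y := Rmax (m - d/2) s).
    assert (Hy1 : s <= y) by apply Rmax_r.
    assert (Hy2 : y < m) by (unfold y; apply Rmax_lub_lt; lra).
    assert (Rabs (y - m) < d).
    { rewrite Rabs_left by lra. assert (m - d/2 <= y) by apply Rmax_l. lra. }
    specialize (Hdd y H). apply Rabs_def2 in Hdd. specialize (P1 y ltac:(lra)). lra. }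
  exists m. split; [|split; [lra|exact P1]].
  split; auto. destruct (Req_dec s m); [subst; lra| lra].
Qed.

Lemma last_time (phi : R -> R) s t beta : s < t -> (forall u, s <= u <= t -> ctn phi u) ->
  phi s <= beta -> beta < phi t ->
  exists z, s <= z < t /\ phi z = beta /\ forall u, z < u <= t -> beta < phi u.
Proof.
  intros Hst Hc Hs Ht.
  destruct (first_time (fun u => beta + (-1) * phi (- u)) (- t) (- s)) as [ts [H1 [H2 H3]]].
  - lra.
  - intros u Hu. apply ctn_affine. apply ctn_refl. apply Hc. lra.
  - rewrite Ropp_involutive. lra.
  - rewrite Ropp_involutive. lra.
  - exists (- ts). split; [lra|]. split; [lra|].
    intros u Hu. specialize (H3 (- u) ltac:(lra)). rewrite Ropp_involutive in H3. lra.
Qed.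

Lemma decr (phi dphi : R -> R) x y : x < y -> (forall u, x <= u <= y -> ctn phi u) ->
  (forall u, x < u < y -> is_derive phi u (dphi u) /\ dphi u <= 0) -> phi y <= phi x.
Proof.
  intros Hxy Hc Hd.
  destruct (MVT_gen phi x y (fun u => Rmin (dphi u) 0)) as [c [Hc1 Hc2]].
  - intros u Hu. rewrite Rmin_left, Rmax_right in Hu by lra.
    destruct (Hd u Hu) as [A B]. rewrite Rmin_left by lra. exact A.
  - intros u Hu. rewrite Rmin_left, Rmax_right in Hu by lra. apply ctn_continuity_pt, Hc. lra.
  - assert (Rmin (dphi c) 0 <= 0) by apply Rmin_r. nra.
Qed.

Lemma barrier (phi dphi : R -> R) T0 s beta beta2 :
  (forall u, u > T0 -> is_derive phi u (dphi u)) -> s > T0 -> phi s <= beta -> beta < beta2 ->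
  (forall u, u >= s -> beta < phi u < beta2 -> dphi u <= 0) ->
  forall t, t >= s -> phi t <= beta.
Proof.
  intros Hd Hs Hps Hbb Hneg t Ht.
  destruct (Rle_dec (phi t) beta) as [|Hgt]; auto. exfalso.
  assert (Hst : s < t) by (destruct (Req_dec s t); [subst; lra| lra]).
  assert (Hc : forall u, u > T0 -> ctn phi u) by (intros u Hu; eapply derive_ctn; apply Hd; auto).
  set (m' := (beta + Rmin (phi t) beta2) / 2).
  assert (Hmin : beta < Rmin (phi t) beta2) by (apply Rmin_glb_lt; lra).
  assert (Hm1 : beta < m') by (unfold m'; lra).
  assert (Hm2 : m' < Rmin (phi t) beta2) by (unfold m'; lra).
  assert (Hm3 := Rmin_l (phi t) beta2). assert (Hm4 := Rmin_r (phi t) beta2).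
  destruct (first_time (fun u => - m' + 1 * phi u) s t) as [t1 [Ht1 [Ht1e Ht1b]]]; auto.
  - intros u Hu. apply ctn_affine. apply Hc. lra.
  - lra.
  - lra.
  - destruct (last_time phi s t1 beta) as [z [Hz1 [Hz2 Hz3]]]; auto; try lra.
    + intros u Hu; apply Hc; lra.
    + assert (phi t1 <= phi z).
      { apply (decr phi dphi z t1); [lra | intros u Hu; apply Hc; lra | ].
        intros u Hu. split. apply Hd; lra. apply Hneg. lra.
        split. apply Hz3; lra. specialize (Ht1b u ltac:(lra)). lra. }
      lra.
Qed.


Definition UU (b k p x : R) := - b * x + k * Rpower x p.
Definition VV (b k p x : R) := - b * (x * x) / 2 + k / (p + 1) * Rpower x (p + 1).
Definition U1 (b k p x : R) := - b + k * p * Rpower x (p - 1).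

Lemma isd_eq (f : R -> R) x l l' : is_derive f x l -> l = l' -> is_derive f x l'.
Proof. intros H ->; exact H. Qed.

Lemma Rpower_pos x y : 0 < Rpower x y.
Proof. unfold Rpower; apply exp_pos. Qed.

Lemma isd_Rpower x y : 0 < x -> is_derive (fun u => Rpower u y) x (y * Rpower x (y - 1)).
Proof. intros Hx. apply is_derive_Reals. apply derivable_pt_lim_power; auto. Qed.

Lemma ex_Rpower x y : 0 < x -> ex_derive (fun u => Rpower u y) x.
Proof. intros Hx. eexists. apply isd_Rpower; auto. Qed.

Lemma Der_Rpower x y : 0 < x -> Derive (fun u => Rpower u y) x = y * Rpower x (y - 1).
Proof. intros Hx. apply is_derive_unique. apply isd_Rpower; auto. Qed.

Lemma isd_VV b k p x : 0 < x -> p > 1 -> is_derive (VV b k p) x (UU b k p x).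
Proof.
  intros Hx Hp. unfold VV, UU. auto_derive. apply ex_Rpower; auto.
  rewrite Der_Rpower by auto. replace (p + 1 - 1) with p by ring. field. lra.
Qed.

Lemma isd_UU b k p x : 0 < x -> p > 1 -> is_derive (UU b k p) x (U1 b k p x).
Proof.
  intros Hx Hp. unfold U1, UU. auto_derive. apply ex_Rpower; auto.
  rewrite Der_Rpower by auto. ring.
Qed.

Lemma Rpower_split x p : 0 < x -> Rpower x p = x * Rpower x (p - 1).
Proof.
  intros Hx. replace p with (1 + (p - 1)) at 1 by ring. rewrite Rpower_plus, Rpower_1; auto.
Qed.

Lemma UU_fact b k p x : 0 < x -> UU b k p x = x * (k * Rpower x (p - 1) - b).
Proof. intros Hx. unfold UU. rewrite (Rpower_split x p Hx). ring. Qed.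


Lemma pow_mono_lt x y c : 0 < c -> 0 < x -> x < y -> Rpower x c < Rpower y c.
Proof. intros; apply Rlt_Rpower_l; auto. Qed.

Lemma pow_mono_le x y c : 0 <= c -> 0 < x -> x <= y -> Rpower x c <= Rpower y c.
Proof. intros; apply Rle_Rpower_l; auto. Qed.

Lemma UU_neg b k p g x : k > 0 -> p > 1 -> Rpower g (p - 1) = b / k -> 0 < x -> x < g -> UU b k p x < 0.
Proof.
  intros Hk Hp Hg Hx Hxg. rewrite UU_fact by auto.
  assert (Rpower x (p - 1) < b / k) by (rewrite <- Hg; apply pow_mono_lt; lra).
  assert (k * Rpower x (p - 1) < b).
  { apply Rmult_lt_compat_l with (r := k) in H; auto. unfold Rdiv in H. rewrite <- Rmult_assoc in H.
    rewrite (Rmult_comm k b), Rmult_assoc, Rinv_r, Rmult_1_r in H by lra. exact H. }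
  nra.
Qed.

Lemma UU_pos b k p g x : k > 0 -> p > 1 -> Rpower g (p - 1) = b / k -> 0 < g -> g < x -> UU b k p x > 0.
Proof.
  intros Hk Hp Hg Hg0 Hxg. rewrite UU_fact by lra.
  assert (b / k < Rpower x (p - 1)) by (rewrite <- Hg; apply pow_mono_lt; lra).
  assert (b < k * Rpower x (p - 1)).
  { apply Rmult_lt_compat_l with (r := k) in H; auto. unfold Rdiv in H. rewrite <- Rmult_assoc in H.
    rewrite (Rmult_comm k b), Rmult_assoc, Rinv_r, Rmult_1_r in H by lra. exact H. }
  nra.
Qed.

Lemma UU_zero b k p g : k > 0 -> Rpower g (p - 1) = b / k -> 0 < g -> UU b k p g = 0.
Proof.
  intros Hk Hg Hg0. rewrite UU_fact by auto. rewrite Hg. field. lra.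
Qed.

Lemma UU_low_left b k p g x r0 r1 : k > 0 -> p > 1 -> 0 < r0 -> 0 < r1 -> r1 < g ->
  0 <= b - k * Rpower (g - r1) (p - 1) ->
  r0 <= x -> x <= g - r1 -> r0 * (b - k * Rpower (g - r1) (p - 1)) <= - UU b k p x.
Proof.
  intros Hk Hp H0 H1 H2 Hc Hx1 Hx2. rewrite UU_fact by lra.
  assert (Rpower x (p - 1) <= Rpower (g - r1) (p - 1)) by (apply pow_mono_le; lra).
  assert (Hq : b - k * Rpower (g - r1) (p - 1) <= b - k * Rpower x (p - 1)) by nra.
  apply Rle_trans with (r0 * (b - k * Rpower x (p - 1))).
  apply Rmult_le_compat_l; lra.
  replace (- (x * (k * Rpower x (p - 1) - b))) with (x * (b - k * Rpower x (p - 1))) by ring.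
  apply Rmult_le_compat_r; lra.
Qed.

Lemma UU_low_right b k p g x r0 r1 : k > 0 -> p > 1 -> 0 < r0 -> 0 < r1 -> 0 < g ->
  0 <= k * Rpower (g + r1) (p - 1) - b ->
  r0 <= x -> g + r1 <= x -> r0 * (k * Rpower (g + r1) (p - 1) - b) <= UU b k p x.
Proof.
  intros Hk Hp H0 H1 H2 Hc Hx1 Hx2. rewrite UU_fact by lra.
  assert (Rpower (g + r1) (p - 1) <= Rpower x (p - 1)) by (apply pow_mono_le; lra).
  assert (Hq : k * Rpower (g + r1) (p - 1) - b <= k * Rpower x (p - 1) - b) by nra.
  apply Rle_trans with (r0 * (k * Rpower x (p - 1) - b)).
  apply Rmult_le_compat_l; lra.
  apply Rmult_le_compat_r; lra.
Qed.

Lemma left_const_pos b k p g r1 : k > 0 -> p > 1 -> Rpower g (p - 1) = b / k -> 0 < r1 -> r1 < g ->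
  0 < b - k * Rpower (g - r1) (p - 1).
Proof.
  intros Hk Hp Hg H1 H2.
  assert (Rpower (g - r1) (p - 1) < b / k) by (rewrite <- Hg; apply pow_mono_lt; lra).
  apply Rmult_lt_compat_l with (r := k) in H; auto. unfold Rdiv in H.
  rewrite <- Rmult_assoc, (Rmult_comm k b), Rmult_assoc, Rinv_r, Rmult_1_r in H by lra. lra.
Qed.

Lemma right_const_pos b k p g r1 : k > 0 -> p > 1 -> Rpower g (p - 1) = b / k -> 0 < r1 -> 0 < g ->
  0 < k * Rpower (g + r1) (p - 1) - b.
Proof.
  intros Hk Hp Hg H1 H2.
  assert (b / k < Rpower (g + r1) (p - 1)) by (rewrite <- Hg; apply pow_mono_lt; lra).
  apply Rmult_lt_compat_l with (r := k) in H; auto. unfold Rdiv in H.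
  rewrite <- Rmult_assoc, (Rmult_comm k b), Rmult_assoc, Rinv_r, Rmult_1_r in H by lra. lra.
Qed.

Lemma UU_bound b k p x M : b > 0 -> k > 0 -> p > 1 -> 0 < x -> x <= M ->
  Rabs (UU b k p x) <= b * M + k * Rpower M p.
Proof.
  intros Hb Hk Hp Hx HM. unfold UU.
  assert (Rpower x p <= Rpower M p) by (apply pow_mono_le; lra).
  assert (0 < Rpower x p) by apply Rpower_pos.
  apply Rabs_le; split; nra.
Qed.

Lemma VV_bound b k p x M : b > 0 -> k > 0 -> p > 1 -> 0 < x -> x <= M ->
  Rabs (VV b k p x) <= b * (M * M) / 2 + k / (p + 1) * Rpower M (p + 1).
Proof.
  intros Hb Hk Hp Hx HM. unfold VV.
  assert (Rpower x (p+1) <= Rpower M (p+1)) by (apply pow_mono_le; lra).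
  assert (0 < Rpower x (p+1)) by apply Rpower_pos.
  assert (0 < k / (p + 1)) by (apply Rdiv_lt_0_compat; lra).
  assert (x * x <= M * M) by nra.
  assert (0 < x * x) by nra.
  assert (k / (p+1) * Rpower x (p+1) <= k / (p+1) * Rpower M (p+1)) by nra.
  assert (0 < k / (p+1) * Rpower x (p+1)) by nra.
  apply Rabs_le; split; nra.
Qed.

Lemma U1_bound b k p x M : b > 0 -> k > 0 -> p > 1 -> 0 < x -> x <= M ->
  U1 b k p x <= k * p * Rpower M (p - 1).
Proof.
  intros Hb Hk Hp Hx HM. unfold U1.
  assert (Rpower x (p-1) <= Rpower M (p-1)) by (apply pow_mono_le; lra).
  assert (0 < k * p) by nra.
  assert (k * p * Rpower x (p-1) <= k * p * Rpower M (p-1)) by (apply Rmult_le_compat_l; lra).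
  lra.
Qed.

Lemma VV_small b k p x r : b > 0 -> k > 0 -> p > 1 -> 0 < x -> x <= r -> r <= 1 ->
  Rabs (VV b k p x) <= (b + k) * r.
Proof.
  intros Hb Hk Hp Hx Hr Hr1.
  assert (H := VV_bound b k p x r Hb Hk Hp Hx Hr).
  rewrite Rpower_split in H by lra. replace (p + 1 - 1) with p in H by ring.
  assert (Rpower r p <= Rpower 1 p) by (apply pow_mono_le; lra).
  replace (Rpower 1 p) with 1 in H0 by (unfold Rpower; rewrite ln_1, Rmult_0_r, exp_0; auto).
  assert (0 < Rpower r p) by apply Rpower_pos.
  assert (k / (p + 1) <= k).
  { unfold Rdiv. assert (/ (p+1) <= 1). { rewrite <- Rinv_1. apply Rinv_le_contravar; lra. } nra. }
  assert (0 < k / (p + 1)) by (apply Rdiv_lt_0_compat; lra).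
  assert (r * r <= r) by nra.
  assert (r * Rpower r p <= r) by nra.
  assert (k / (p+1) * (r * Rpower r p) <= k * r) by nra.
  assert (b * (r * r) / 2 <= b * r) by nra.
  lra.
Qed.

Lemma VV_min b k p g x : b > 0 -> k > 0 -> p > 1 -> Rpower g (p - 1) = b / k -> 0 < g -> 0 < x ->
  VV b k p g <= VV b k p x.
Proof.
  intros Hb Hk Hp Hg Hg0 Hx.
  destruct (Rtotal_order x g) as [Hl|[He|Hr]].
  - apply (decr (VV b k p) (UU b k p) x g); auto.
    + intros u Hu. eapply derive_ctn. apply isd_VV; lra.
    + intros u Hu. split. apply isd_VV; lra. left; apply (UU_neg b k p g); auto; lra.
  - subst; lra.
  - assert (-1 * VV b k p x <= -1 * VV b k p g); [|lra].
    apply (decr (fun u => -1 * VV b k p u) (fun u => -1 * UU b k p u) g x); auto.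
    + intros u Hu. eapply derive_ctn. apply is_derive_scal. apply isd_VV; lra.
    + intros u Hu. split. apply is_derive_scal. apply isd_VV; lra.
      assert (UU b k p u > 0) by (apply (UU_pos b k p g); auto; lra). lra.
Qed.

Lemma VV_strict_r b k p g r : b > 0 -> k > 0 -> p > 1 -> Rpower g (p - 1) = b / k -> 0 < g -> 0 < r ->
  VV b k p g < VV b k p (g + r).
Proof.
  intros Hb Hk Hp Hg Hg0 Hr.
  assert (H1 := VV_min b k p g (g + r/2) Hb Hk Hp Hg Hg0 ltac:(lra)).
  destruct (MVT_gen (VV b k p) (g + r/2) (g + r) (UU b k p)) as [c [Hc1 Hc2]].
  - intros u Hu. apply isd_VV; auto. rewrite Rmin_left in Hu by lra. lra.
  - intros u Hu. apply ctn_continuity_pt. eapply derive_ctn. apply isd_VV; auto.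
    rewrite Rmin_left in Hu by lra. lra.
  - rewrite Rmin_left, Rmax_right in Hc1 by lra.
    assert (UU b k p c > 0) by (apply (UU_pos b k p g); auto; lra). nra.
Qed.

Lemma VV_strict_l b k p g r : b > 0 -> k > 0 -> p > 1 -> Rpower g (p - 1) = b / k -> 0 < g -> 0 < r -> r < g ->
  VV b k p g < VV b k p (g - r).
Proof.
  intros Hb Hk Hp Hg Hg0 Hr Hrg.
  assert (H1 := VV_min b k p g (g - r/2) Hb Hk Hp Hg Hg0 ltac:(lra)).
  destruct (MVT_gen (VV b k p) (g - r) (g - r/2) (UU b k p)) as [c [Hc1 Hc2]].
  - intros u Hu. apply isd_VV; auto. rewrite Rmin_left in Hu by lra. lra.
  - intros u Hu. apply ctn_continuity_pt. eapply derive_ctn. apply isd_VV; auto.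
    rewrite Rmin_left in Hu by lra. lra.
  - rewrite Rmin_left, Rmax_right in Hc1 by lra.
    assert (UU b k p c < 0) by (apply (UU_neg b k p g); auto; lra). nra.
Qed.

Lemma W_ineq a eta B1 y u e u1 : a > 0 -> 0 < eta -> eta <= 1 -> eta <= a -> 0 <= B1 ->
  eta * (B1 + a * a / 2) <= a / 4 -> u1 <= B1 ->
  y * (- a * y - u - e) + u * y + eta * ((- a * y - u - e) * u + y * u1 * y)
  <= - (eta / 4) * (y * y + u * u) + (1 / a + 1) * (e * e).
Proof.
  intros Ha He1 He2 He3 HB HeB Hu1.
  assert (h1 : - (eta * a * u * y) <= eta * (u * u / 2 + a * a * (y * y) / 2)).
  { assert (0 <= eta * ((u + a * y) * (u + a * y))) by (apply Rmult_le_pos; [lra | apply Rle_0_sqr]). lra. }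
  assert (h2 : - (e * y) <= (a / 4) * (y * y) + e * e / a).
  { assert (0 <= / a * ((a * y / 2 + e) * (a * y / 2 + e))).
    { apply Rmult_le_pos. left; apply Rinv_0_lt_compat; auto. apply Rle_0_sqr. }
    assert (Hid : / a * ((a * y / 2 + e) * (a * y / 2 + e)) = (a / 4) * (y * y) + e * e / a + e * y) by (field; lra).
    lra. }
  assert (h3 : - (eta * e * u) <= eta * (u * u / 4 + e * e)).
  { assert (0 <= eta * ((u / 2 + e) * (u / 2 + e))) by (apply Rmult_le_pos; [lra | apply Rle_0_sqr]). lra. }
  assert (h4 : eta * u1 * (y * y) <= eta * B1 * (y * y)).
  { assert (0 <= y * y) by nra. apply Rmult_le_compat_r; auto. apply Rmult_le_compat_l; lra. }
  assert (h5 : eta * (B1 + a * a / 2) * (y * y) <= a / 4 * (y * y)) by (apply Rmult_le_compat_r; nra).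
  assert (h6 : eta * (e * e) <= e * e) by nra.
  assert (h7 : eta / 4 * (y * y) <= a / 2 * (y * y)) by (apply Rmult_le_compat_r; [nra|lra]).
  assert (Hea : e * e / a = 1 / a * (e * e)) by (field; lra).
  nra.
Qed.

Lemma isd_W b k p eta (w w1 : R -> R) x dw dw1 : 0 < w x -> p > 1 -> is_derive w x dw -> is_derive w1 x dw1 ->
 is_derive (fun t => w1 t * w1 t / 2 + VV b k p (w t) + eta * w1 t * UU b k p (w t)) x
  (w1 x * dw1 + UU b k p (w x) * dw + eta * (dw1 * UU b k p (w x) + w1 x * U1 b k p (w x) * dw)).
Proof.
  intros Hw Hp H1 H2. auto_derive.
  - repeat split; try (eexists; eassumption).
    eexists; apply isd_VV; auto. eexists; apply isd_UU; auto.
  - replace (Derive (fun x0 => w1 x0) x) with dw1 by (symmetry; apply is_derive_unique; auto).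
    replace (Derive (fun x0 => w x0) x) with dw by (symmetry; apply is_derive_unique; auto).
    replace (Derive (fun x0 => VV b k p x0) (w x)) with (UU b k p (w x)) by (symmetry; apply is_derive_unique; apply isd_VV; auto).
    replace (Derive (fun x0 => UU b k p x0) (w x)) with (U1 b k p (w x)) by (symmetry; apply is_derive_unique; apply isd_UU; auto).
    field.
Qed.

Lemma isd_lin (f : R -> R) x df c : is_derive f x df -> is_derive (fun u => f u + c * u) x (df + c).
Proof.
  intros H. auto_derive. eexists; eauto.
  replace (Derive (fun x0 => f x0) x) with df by (symmetry; apply is_derive_unique; auto). ring.
Qed.


Lemma w1_bound a b k p M T0 (w w1 e : R -> R) :
 a > 0 -> b > 0 -> k > 0 -> p > 1 -> M > 0 ->
 (forall t, t > T0 -> is_derive w t (w1 t) /\ is_derive w1 t (- a * w1 t - UU b k p (w t) - e t)) ->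
 (forall t, t > T0 -> 0 < w t /\ w t <= M) ->
 (forall eps, eps > 0 -> exists T, forall t, t > T -> Rabs (e t) <= eps) ->
 exists M1 S, M1 >= 1 /\ S > T0 /\ forall t, t >= S -> Rabs (w1 t) <= M1.
Proof.
  intros Ha Hb Hk Hp HM Hd Hw He.
  destruct (He 1 ltac:(lra)) as [Te HTe].
  set (S := Rmax T0 Te + 1).
  assert (HS1 : S > T0) by (unfold S; pose proof (Rmax_l T0 Te); lra).
  assert (HS2 : S > Te) by (unfold S; pose proof (Rmax_r T0 Te); lra).
  set (B := b * M + k * Rpower M p + 1).
  set (be := Rmax (Rabs (w1 S)) (B / a)).
  exists (Rmax be 1), S. split; [apply Rle_ge, Rmax_r|]. split; auto.
  assert (Hbe1 := Rmax_l (Rabs (w1 S)) (B / a)). assert (Hbe2 := Rmax_r (Rabs (w1 S)) (B / a)).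
  fold be in Hbe1, Hbe2.
  assert (HaB : a * (B / a) = B) by (field; lra).
  assert (Hub : forall t, t > T0 -> t > Te -> Rabs (UU b k p (w t)) + Rabs (e t) <= B).
  { intros t Ht1 Ht2. destruct (Hw t Ht1). assert (H1 := UU_bound b k p (w t) M Hb Hk Hp H H0).
    assert (H2 := HTe t Ht2). unfold B. lra. }
  assert (Hup : forall t, t >= S -> w1 t <= be).
  { apply (barrier w1 (fun u => - a * w1 u - UU b k p (w u) - e u) T0 S be (be + 1)); auto.
    - intros u Hu; apply Hd; auto.
    - apply Rle_trans with (Rabs (w1 S)); auto. apply RRle_abs.
    - lra.
    - intros u Hu Hbu. assert (H := Hub u ltac:(lra) ltac:(lra)).
      assert (a * be <= a * w1 u) by (apply Rmult_le_compat_l; lra).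
      assert (a * (B/a) <= a * be) by (apply Rmult_le_compat_l; lra).
      pose proof (Rle_abs (- UU b k p (w u))). rewrite Rabs_Ropp in H2.
      pose proof (Rle_abs (- e u)). rewrite Rabs_Ropp in H3. lra. }
  assert (Hlo : forall t, t >= S -> -1 * w1 t <= be).
  { apply (barrier (fun u => -1 * w1 u) (fun u => -1 * (- a * w1 u - UU b k p (w u) - e u)) T0 S be (be + 1)); auto.
    - intros u Hu; apply is_derive_scal; apply Hd; auto.
    - apply Rle_trans with (Rabs (w1 S)); auto. rewrite <- Rabs_Ropp. replace (-1 * w1 S) with (- w1 S) by ring. apply RRle_abs.
    - lra.
    - intros u Hu Hbu. assert (H := Hub u ltac:(lra) ltac:(lra)).
      assert (a * be <= a * (-1 * w1 u)) by (apply Rmult_le_compat_l; lra).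
      assert (a * (B/a) <= a * be) by (apply Rmult_le_compat_l; lra).
      pose proof (Rle_abs (UU b k p (w u))).
      pose proof (Rle_abs (e u)). lra. }
  intros t Ht. specialize (Hup t Ht). specialize (Hlo t Ht).
  pose proof (Rmax_l be 1). apply Rabs_le. lra.
Qed.


Lemma le_div_mul x y z : 0 < z -> x <= y / z -> x * z <= y.
Proof.
  intros Hz H. apply Rmult_le_compat_r with (r := z) in H; [|lra].
  unfold Rdiv in H. rewrite Rmult_assoc, Rinv_l, Rmult_1_r in H by lra. exact H.
Qed.

Lemma absle x y : Rabs x <= y -> - y <= x <= y.
Proof. intros H. pose proof (Rle_abs x). pose proof (Rle_abs (- x)). rewrite Rabs_Ropp in H1. lra. Qed.

Lemma abslt x y : Rabs x < y -> - y < x < y.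
Proof. intros H. pose proof (Rle_abs x). pose proof (Rle_abs (- x)). rewrite Rabs_Ropp in H1. lra. Qed.

Lemma core a b k p g M T0 (w w1 e : R -> R) :
 a > 0 -> b > 0 -> k > 0 -> p > 1 -> 0 < g -> Rpower g (p - 1) = b / k -> M > 0 ->
 (forall t, t > T0 -> is_derive w t (w1 t) /\ is_derive w1 t (- a * w1 t - UU b k p (w t) - e t)) ->
 (forall t, t > T0 -> 0 < w t /\ w t <= M) ->
 (forall eps, eps > 0 -> exists T, forall t, t > T -> Rabs (e t) <= eps) ->
 (exists c, c > 0 /\ forall T, exists t, t > T /\ w t >= c) ->
 forall eps', eps' > 0 -> exists T, forall t, t > T -> Rabs (w t - g) < eps' /\ Rabs (w1 t) < eps'.
Proof.
  intros Ha Hb Hk Hp Hg0 Hg HM Hd Hw He [c [Hc Hls]] eps' Heps'.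
  destruct (w1_bound a b k p M T0 w w1 e) as [M1 [S [HM1 [HS HM1b]]]]; auto.
  set (UM := b * M + k * Rpower M p).
  assert (HUM : 0 < UM) by (unfold UM; pose proof (Rpower_pos M p); nra).
  set (B1 := k * p * Rpower M (p - 1)).
  assert (HB1 : 0 <= B1) by (unfold B1; pose proof (Rpower_pos M (p-1)); assert (0 < k * p) by nra; nra).
  assert (HVc := derive_ctn (VV b k p) g (UU b k p g) (isd_VV b k p g Hg0 Hp)).
  destruct (HVc (eps' * eps' / 8)) as [dl [Hdl Hdl2]]. { nra. }
  set (rho := Rmin (Rmin (g / 4) (eps' / 2)) (dl / 2)).
  assert (Hr1 : rho <= g / 4) by (unfold rho; eapply Rle_trans; [apply Rmin_l| apply Rmin_l]).
  assert (Hr2 : rho <= eps' / 2) by (unfold rho; eapply Rle_trans; [apply Rmin_l| apply Rmin_r]).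
  assert (Hr3 : rho <= dl / 2) by (unfold rho; apply Rmin_r).
  assert (Hr0 : 0 < rho) by (unfold rho; repeat apply Rmin_pos; lra).
  set (Dl := Rmin (VV b k p (g - rho)) (VV b k p (g + rho)) - VV b k p g).
  assert (HDl1 : VV b k p g + Dl <= VV b k p (g - rho)) by (unfold Dl; pose proof (Rmin_l (VV b k p (g - rho)) (VV b k p (g + rho))); lra).
  assert (HDl2 : VV b k p g + Dl <= VV b k p (g + rho)) by (unfold Dl; pose proof (Rmin_r (VV b k p (g - rho)) (VV b k p (g + rho))); lra).
  assert (HDl0 : 0 < Dl).
  { unfold Dl. assert (H1 := VV_strict_l b k p g rho Hb Hk Hp Hg Hg0 Hr0 ltac:(lra)).
    assert (H2 := VV_strict_r b k p g rho Hb Hk Hp Hg Hg0 Hr0).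
    unfold Rmin; destruct Rle_dec; lra. }
  assert (HDl3 : Dl < eps' * eps' / 8).
  { assert (H := Hdl2 (g + rho) ltac:(replace (g + rho - g) with rho by ring; rewrite Rabs_right; lra)).
    apply Rabs_def2 in H. lra. }
  set (eta := Rmin (Rmin (1/2) a) (Rmin (a / (4 * (B1 + a * a / 2))) (Dl / (2 * UM * UM + 1)))).
  assert (He1 : eta <= 1/2) by (unfold eta; eapply Rle_trans; [apply Rmin_l| apply Rmin_l]).
  assert (He2 : eta <= a) by (unfold eta; eapply Rle_trans; [apply Rmin_l| apply Rmin_r]).
  assert (He3 : eta <= a / (4 * (B1 + a * a / 2))) by (unfold eta; eapply Rle_trans; [apply Rmin_r| apply Rmin_l]).
  assert (He4 : eta <= Dl / (2 * UM * UM + 1)) by (unfold eta; eapply Rle_trans; [apply Rmin_r| apply Rmin_r]).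
  assert (He0 : 0 < eta).
  { unfold eta. repeat apply Rmin_pos; try lra; apply Rdiv_lt_0_compat; nra. }
  assert (HeB : eta * (B1 + a * a / 2) <= a / 4).
  { apply le_div_mul in He3; [nra|nra]. }
  assert (HeU : eta * (UM * UM) <= Dl / 2).
  { apply le_div_mul in He4; [nra|nra]. }
  set (C := 1 / a + 1).
  assert (HC : 0 < C) by (unfold C; assert (0 < 1/a) by (apply Rdiv_lt_0_compat; lra); lra).
  set (c0 := eta / 4).
  destruct (HVc (Dl / 8)) as [dl1 [Hdl1 Hdl12]]. { lra. }
  set (rho1 := Rmin rho (dl1 / 2)).
  assert (Hq1 : rho1 <= rho) by apply Rmin_l.
  assert (Hq2 : rho1 <= dl1 / 2) by apply Rmin_r.
  assert (Hq0 : 0 < rho1) by (unfold rho1; apply Rmin_pos; lra).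
  set (c' := Rmin c g).
  assert (Hc1 : c' <= c) by apply Rmin_l.
  assert (Hc2 : c' <= g) by apply Rmin_r.
  assert (Hc0 : 0 < c') by (unfold c'; apply Rmin_pos; lra).
  set (uI := c' / 4 * (b - k * Rpower (c' / 2) (p - 1))).
  assert (HuIc : 0 < b - k * Rpower (c' / 2) (p - 1)).
  { assert (H := left_const_pos b k p g (g - c' / 2) Hk Hp Hg ltac:(lra) ltac:(lra)).
    replace (g - (g - c' / 2)) with (c' / 2) in H by ring. exact H. }
  assert (HuI : 0 < uI) by (unfold uI; apply Rmult_lt_0_compat; lra).
  set (kI := c0 * uI * uI / 2).
  assert (HkI : 0 < kI) by (unfold kI, c0; assert (0 < uI * uI) by nra; nra).
  set (D0 := kI * (c' / 4) / M1).
  assert (HD0 : 0 < D0) by (unfold D0; apply Rdiv_lt_0_compat; [nra|lra]).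
  set (rho0 := Rmin (Rmin (c' / 8) 1) (D0 / (8 * (b + k) + 1))).
  assert (Hs1 : rho0 <= c' / 8) by (unfold rho0; eapply Rle_trans; [apply Rmin_l| apply Rmin_l]).
  assert (Hs2 : rho0 <= 1) by (unfold rho0; eapply Rle_trans; [apply Rmin_l| apply Rmin_r]).
  assert (Hs3 : rho0 <= D0 / (8 * (b + k) + 1)) by (unfold rho0; apply Rmin_r).
  assert (Hs0 : 0 < rho0) by (unfold rho0; repeat apply Rmin_pos; try lra; apply Rdiv_lt_0_compat; lra).
  assert (Hs4 : (b + k) * rho0 <= D0 / 8).
  { apply le_div_mul in Hs3; [nra|lra]. }
  set (ql := b - k * Rpower (g - rho1) (p - 1)).
  set (qr := k * Rpower (g + rho1) (p - 1) - b).
  assert (Hql : 0 < ql) by (apply left_const_pos; auto; lra).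
  assert (Hqr : 0 < qr) by (apply right_const_pos; auto; lra).
  set (us := rho0 * Rmin ql qr).
  assert (Hus : 0 < us) by (unfold us; apply Rmult_lt_0_compat; auto; apply Rmin_pos; auto).
  set (d := Rmin (us * us) (Rmin (Dl / 8) (D0 / 8))).
  assert (Hd1 : d <= us * us) by apply Rmin_l.
  assert (Hd2 : d <= Dl / 8) by (unfold d; eapply Rle_trans; [apply Rmin_r| apply Rmin_l]).
  assert (Hd3 : d <= D0 / 8) by (unfold d; eapply Rle_trans; [apply Rmin_r| apply Rmin_r]).
  assert (Hd0 : 0 < d) by (unfold d; repeat apply Rmin_pos; nra).
  set (sig := D0 / 8 + d).
  set (kd := c0 * d / 2).
  assert (Hkd : 0 < kd) by (unfold kd, c0; nra).
  set (eps := Rmin 1 (Rmin kd kI / C)).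
  assert (Hep1 : eps <= 1) by apply Rmin_l.
  assert (Hep2 : eps <= Rmin kd kI / C) by apply Rmin_r.
  assert (Hep0 : 0 < eps) by (unfold eps; apply Rmin_pos; [lra|]; apply Rdiv_lt_0_compat; auto; apply Rmin_pos; auto).
  assert (HCe : C * eps <= Rmin kd kI).
  { apply Rmult_le_compat_l with (r := C) in Hep2; [|lra]. unfold Rdiv in Hep2.
    rewrite (Rmult_comm (Rmin kd kI)), <- Rmult_assoc, Rinv_r, Rmult_1_l in Hep2 by lra. exact Hep2. }
  destruct (He eps Hep0) as [Te HTe].
  set (T1 := Rmax S Te + 1).
  assert (HT1a : T1 > S) by (unfold T1; pose proof (Rmax_l S Te); lra).
  assert (HT1b : T1 > Te) by (unfold T1; pose proof (Rmax_r S Te); lra).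
  assert (Hlate : forall t, t >= T1 -> t > T0 /\ Rabs (e t) <= eps /\ Rabs (w1 t) <= M1 /\ 0 < w t /\ w t <= M).
  { intros t Ht. assert (t > T0) by lra. destruct (Hw t H).
    repeat split; auto. apply HTe; lra. apply HM1b; lra. }
  set (W := fun t => w1 t * w1 t / 2 + VV b k p (w t) + eta * w1 t * UU b k p (w t)).
  set (dW := fun t => w1 t * (- a * w1 t - UU b k p (w t) - e t) + UU b k p (w t) * w1 t
     + eta * ((- a * w1 t - UU b k p (w t) - e t) * UU b k p (w t) + w1 t * U1 b k p (w t) * w1 t)).
  assert (HWd : forall t, t > T0 -> is_derive W t (dW t)).
  { intros t Ht. destruct (Hd t Ht). unfold W, dW. apply isd_W; auto. apply Hw; auto. }
  assert (HWc : forall t, t > T0 -> ctn W t) by (intros t Ht; eapply derive_ctn; apply HWd; auto).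
  set (Dd := fun t => w1 t * w1 t + UU b k p (w t) * UU b k p (w t)).
  assert (HWest : forall t, t >= T1 -> dW t <= - c0 * Dd t + Rmin kd kI).
  { intros t Ht. destruct (Hlate t Ht) as [H1 [H2 [H3 [H4 H5]]]].
    assert (Hi := W_ineq a eta B1 (w1 t) (UU b k p (w t)) (e t) (U1 b k p (w t)) Ha He0 ltac:(lra) He2 HB1 HeB
      (U1_bound b k p (w t) M Hb Hk Hp H4 H5)).
    assert (e t * e t <= eps).
    { assert (Rabs (e t) * Rabs (e t) <= eps * 1) by (apply Rmult_le_compat; auto using Rabs_pos; lra).
      rewrite <- Rabs_mult in H. rewrite Rabs_right in H by (apply Rle_ge; apply Rle_0_sqr). lra. }
    unfold dW, Dd, c0. assert (C * (e t * e t) <= C * eps) by (apply Rmult_le_compat_l; lra).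
    unfold C in *. lra. }
  assert (HDEC : forall t, t >= T1 -> Dd t >= d -> dW t <= - kd).
  { intros t Ht HD. assert (H := HWest t Ht). assert (Rmin kd kI <= kd) by apply Rmin_l.
    assert (c0 * d <= c0 * Dd t) by (apply Rmult_le_compat_l; unfold c0; lra).
    unfold kd in *. lra. }
  assert (Hcross : forall t, t >= T1 -> Rabs (eta * w1 t * UU b k p (w t)) <= eta * Dd t / 2).
  { intros t Ht. unfold Dd. rewrite !Rabs_mult. rewrite (Rabs_right eta) by lra.
    assert (Rabs (w1 t) * Rabs (UU b k p (w t)) <= (w1 t * w1 t + UU b k p (w t) * UU b k p (w t)) / 2).
    { destruct (Rcase_abs (w1 t)) as [Hx|Hx]; [rewrite (Rabs_left (w1 t)) by lra| rewrite (Rabs_right (w1 t)) by lra];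
      (destruct (Rcase_abs (UU b k p (w t))) as [Hy|Hy]; [rewrite (Rabs_left (UU b k p (w t))) by lra| rewrite (Rabs_right (UU b k p (w t))) by lra]);
      (pose proof (Rle_0_sqr (w1 t - UU b k p (w t))); pose proof (Rle_0_sqr (w1 t + UU b k p (w t))); unfold Rsqr in *; lra). }
    rewrite Rmult_assoc. apply Rle_trans with (eta * ((w1 t * w1 t + UU b k p (w t) * UU b k p (w t)) / 2)).
    apply Rmult_le_compat_l; lra. lra. }
  assert (HWlow : forall t, t >= T1 -> W t >= (1 - eta) * (w1 t * w1 t) / 2 + VV b k p (w t) - Dl / 4).
  { intros t Ht. destruct (Hlate t Ht) as [H1 [H2 [H3 [H4 H5]]]].
    assert (Hcr := Hcross t Ht). pose proof (Rle_abs (- (eta * w1 t * UU b k p (w t)))) as Hcr2. rewrite Rabs_Ropp in Hcr2.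
    assert (HU := UU_bound b k p (w t) M Hb Hk Hp H4 H5). fold UM in HU.
    assert (UU b k p (w t) * UU b k p (w t) <= UM * UM).
    { rewrite <- (Rabs_right (UU b k p (w t) * UU b k p (w t))) by (apply Rle_ge, Rle_0_sqr).
      rewrite Rabs_mult. apply Rmult_le_compat; auto using Rabs_pos. }
    assert (eta * (UU b k p (w t) * UU b k p (w t)) <= eta * (UM * UM)) by (apply Rmult_le_compat_l; lra).
    unfold W, Dd in *. lra. }
  assert (HWlowg : forall t, t >= T1 -> W t >= (1 - eta) * (w1 t * w1 t) / 2 + VV b k p g - Dl / 4).
  { intros t Ht. assert (H := HWlow t Ht). destruct (Hlate t Ht) as [_ [_ [_ [H4 _]]]].
    assert (H6 := VV_min b k p g (w t) Hb Hk Hp Hg Hg0 H4). lra. }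
  assert (HKEY : forall t, t >= T1 -> Dd t < d ->
     (w t < rho0 /\ Rabs (W t) <= sig) \/ (Rabs (w t - g) < rho /\ W t < VV b k p g + Dl / 4)).
  { intros t Ht HD. destruct (Hlate t Ht) as [H1 [H2 [H3 [H4 H5]]]].
    assert (Hcr := Hcross t Ht).
    assert (Hu2 : UU b k p (w t) * UU b k p (w t) < us * us) by (unfold Dd in HD; pose proof (Rle_0_sqr (w1 t)); unfold Rsqr in *; lra).
    assert (Hu : Rabs (UU b k p (w t)) < us).
    { destruct (Rlt_dec (Rabs (UU b k p (w t))) us) as [|Hn]; auto. exfalso.
      assert (us * us <= Rabs (UU b k p (w t)) * Rabs (UU b k p (w t))) by (apply Rmult_le_compat; lra).
      rewrite <- Rabs_mult, Rabs_right in H by (apply Rle_ge, Rle_0_sqr). lra. }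
    assert (Hww : 0 <= w1 t * w1 t) by apply Rle_0_sqr.
    assert (HUU : 0 <= UU b k p (w t) * UU b k p (w t)) by apply Rle_0_sqr.
    destruct (Rlt_dec (w t) rho0) as [Hlt|Hge].
    - left. split; auto.
      assert (HV := VV_small b k p (w t) rho0 Hb Hk Hp H4 ltac:(lra) Hs2).
      unfold W. unfold Dd in *.
      apply absle in Hcr. apply absle in HV.
      assert (eta * (w1 t * w1 t + UU b k p (w t) * UU b k p (w t)) <= 1/2 * (w1 t * w1 t + UU b k p (w t) * UU b k p (w t))) by (apply Rmult_le_compat_r; lra).
      apply Rabs_le. unfold sig. split; lra.
    - right.
      assert (Hx1 : g - rho1 < w t).
      { destruct (Rlt_dec (g - rho1) (w t)) as [|Hn]; auto. exfalso.
        assert (HL := UU_low_left b k p g (w t) rho0 rho1 Hk Hp Hs0 Hq0 ltac:(lra) (Rlt_le _ _ Hql) ltac:(lra) ltac:(lra)).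
        fold ql in HL. assert (us <= rho0 * ql) by (unfold us; apply Rmult_le_compat_l; [lra| apply Rmin_l]).
        pose proof (Rle_abs (- UU b k p (w t))). rewrite Rabs_Ropp in H0. lra. }
      assert (Hx2 : w t < g + rho1).
      { destruct (Rlt_dec (w t) (g + rho1)) as [|Hn]; auto. exfalso.
        assert (HL := UU_low_right b k p g (w t) rho0 rho1 Hk Hp Hs0 Hq0 Hg0 (Rlt_le _ _ Hqr) ltac:(lra) ltac:(lra)).
        fold qr in HL. assert (us <= rho0 * qr) by (unfold us; apply Rmult_le_compat_l; [lra| apply Rmin_r]).
        pose proof (Rle_abs (UU b k p (w t))). lra. }
      split. apply Rabs_def1; lra.
      assert (HV := Hdl12 (w t) ltac:(apply Rabs_def1; lra)). apply abslt in HV.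
      apply absle in Hcr.
      assert (eta * (w1 t * w1 t + UU b k p (w t) * UU b k p (w t)) <= 1/2 * (w1 t * w1 t + UU b k p (w t) * UU b k p (w t))) by (apply Rmult_le_compat_r; lra).
      unfold W. unfold Dd in *. lra. }
  assert (ClaimA : forall s, s >= T1 -> Rabs (w s - g) < rho -> W s < VV b k p g + Dl / 4 ->
     forall t, t >= s -> Rabs (w t - g) < rho /\ W t < VV b k p g + Dl / 2).
  { intros s Hs Hws HWs t Ht.
    set (psi := fun u => Rmax (- rho + 1 * Rabs (w u - g)) (- (VV b k p g + Dl / 2) + 1 * W u)).
    destruct (classic (Rabs (w t - g) < rho /\ W t < VV b k p g + Dl / 2)) as [|Hn]; auto. exfalso.
    assert (Hpt : 0 <= psi t).
    { unfold psi. apply not_and_or in Hn; destruct Hn as [Hn|Hn];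
      [eapply Rle_trans; [|apply Rmax_l]; lra | eapply Rle_trans; [|apply Rmax_r]; lra]. }
    assert (Hps : psi s < 0) by (unfold psi; apply Rmax_lub_lt; lra).
    assert (Hst : s < t) by (destruct (Req_dec s t); [subst; lra | lra]).
    assert (Hpc : forall u, s <= u <= t -> ctn psi u).
    { intros u Hu. unfold psi. apply ctn_max; apply ctn_affine.
      apply ctn_minus_abs. eapply derive_ctn. apply Hd; lra. apply HWc; lra. }
    destruct (first_time psi s t) as [ts [Hts1 [Hts2 Hts3]]]; auto.
    assert (Hpu : forall u, s <= u < ts -> Rabs (w u - g) < rho /\ W u < VV b k p g + Dl / 2).
    { intros u Hu. specialize (Hts3 u Hu). unfold psi in Hts3.
      pose proof (Rmax_l (- rho + 1 * Rabs (w u - g)) (- (VV b k p g + Dl / 2) + 1 * W u)).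
      pose proof (Rmax_r (- rho + 1 * Rabs (w u - g)) (- (VV b k p g + Dl / 2) + 1 * W u)). lra. }
    unfold psi in Hts2.
    pose proof (Rmax_l (- rho + 1 * Rabs (w ts - g)) (- (VV b k p g + Dl / 2) + 1 * W ts)) as Hm1.
    pose proof (Rmax_r (- rho + 1 * Rabs (w ts - g)) (- (VV b k p g + Dl / 2) + 1 * W ts)) as Hm2.
    destruct (Rle_lt_dec rho (Rabs (w ts - g))) as [Heq|Hlt].
    - assert (Hb1 : Rabs (w ts - g) <= rho) by lra.
      assert (Hb2 : W ts <= VV b k p g + Dl / 2) by lra.
      clear Hm1 Hm2 Hts2.
      assert (HL := HWlow ts ltac:(lra)).
      assert (0 <= (1 - eta) * (w1 ts * w1 ts) / 2) by (pose proof (Rle_0_sqr (w1 ts)); unfold Rsqr in *; assert (0 <= (1-eta)) by lra; nra).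
      destruct (Rcase_abs (w ts - g)) as [Hn1|Hn1].
      + rewrite Rabs_left in Heq, Hb1 by lra. replace (w ts) with (g - rho) in HL by lra. lra.
      + rewrite Rabs_right in Heq, Hb1 by lra. replace (w ts) with (g + rho) in HL by lra. lra.
    - assert (HWts : W ts = VV b k p g + Dl / 2).
      { revert Hts2. unfold Rmax. destruct Rle_dec; lra. }
      assert (Hts1' : s < ts) by lra.
      destruct (last_time W s ts (VV b k p g + Dl / 4)) as [z [Hz1 [Hz2 Hz3]]]; auto; try lra.
      { intros u Hu. apply HWc. lra. }
      assert (W ts <= W z); [|lra].
      apply (decr W dW z ts); [lra| intros u Hu; apply HWc; lra|].
      intros u Hu. split. apply HWd; lra.
      destruct (Hpu u ltac:(lra)) as [Hp1 Hp2]. assert (Hp3 := Hz3 u ltac:(lra)).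
      destruct (Rlt_dec (Dd u) d) as [HD|HD].
      + destruct (HKEY u ltac:(lra) HD) as [[Hk1 Hk2]|[Hk1 Hk2]].
        * apply abslt in Hp1. lra.
        * lra.
      + assert (dW u <= - kd) by (apply HDEC; lra). lra. }
  assert (HWlb : forall u, u >= T1 -> W u >= VV b k p g - Dl / 4).
  { intros u Hu. assert (H := HWlowg u Hu). pose proof (Rle_0_sqr (w1 u)). unfold Rsqr in *.
    assert (0 <= (1 - eta) * (w1 u * w1 u)) by (apply Rmult_le_pos; lra). lra. }
  assert (ClaimB : exists s, s >= T1 /\ Rabs (w s - g) < rho /\ W s < VV b k p g + Dl / 4).
  { destruct (classic (exists s, s >= T1 /\ Rabs (w s - g) < rho /\ W s < VV b k p g + Dl / 4)) as [|Hno]; auto.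
    exfalso.
    assert (Hstar : forall u, u >= T1 -> (w u < rho0 /\ Rabs (W u) <= sig) \/ dW u <= - kd).
    { intros u Hu. destruct (Rlt_dec (Dd u) d) as [HD|HD].
      - destruct (HKEY u Hu HD) as [H|H]; [left; auto|]. exfalso; apply Hno; exists u; tauto.
      - right; apply HDEC; lra. }
    assert (Lrun : forall s, s >= T1 -> (forall u, u >= s -> dW u <= - kd) -> False).
    { intros s Hs Hall.
      assert (HX : 0 < W s - VV b k p g + Dl) by (assert (H := HWlb s Hs); lra).
      set (t := s + (W s - VV b k p g + Dl) / kd + 1).
      assert (Hts : s < t) by (unfold t; assert (0 < (W s - VV b k p g + Dl) / kd) by (apply Rdiv_lt_0_compat; lra); lra).
      assert (H := decr (fun u => W u + kd * u) (fun u => dW u + kd) s t Hts).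
      assert (W t + kd * t <= W s + kd * s).
      { apply H.
        - intros u Hu. eapply derive_ctn. apply isd_lin. apply HWd. lra.
        - intros u Hu. split. apply isd_lin. apply HWd. lra. assert (dW u <= - kd) by (apply Hall; lra). lra. }
      assert (kd * (t - s) = W s - VV b k p g + Dl + kd) by (unfold t; field; lra).
      assert (H2 := HWlb t ltac:(lra)). lra. }
    assert (LN0 : forall s, s >= T1 -> exists u, u >= s /\ w u < rho0 /\ Rabs (W u) <= sig).
    { intros s Hs. destruct (classic (exists u, u >= s /\ w u < rho0 /\ Rabs (W u) <= sig)) as [|Hn]; auto.
      exfalso. apply (Lrun s Hs). intros u Hu. destruct (Hstar u ltac:(lra)) as [[A B]|]; auto.
      exfalso; apply Hn; exists u; auto. }
    destruct (LN0 T1 ltac:(lra)) as [s0 [Hs0a [Hs0b Hs0c]]].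
    assert (HWs0 : forall t, t >= s0 -> W t <= sig).
    { apply (barrier W dW T0 s0 sig (sig + 1)); auto; try lra.
      - apply absle in Hs0c; lra.
      - intros u Hu Hb'. destruct (Hstar u ltac:(lra)) as [[A B]|]; [apply absle in B; lra| lra]. }
    destruct (Hls s0) as [s2 [Hs2a Hs2b]].
    assert (Hwc : forall u, u > T0 -> ctn w u) by (intros u Hu; eapply derive_ctn; apply Hd; auto).
    destruct (first_time (fun u => - (c' / 2) + 1 * w u) s0 s2) as [u2 [Hu2a [Hu2b Hu2c]]]; auto.
    { intros u Hu. apply ctn_affine. apply Hwc. lra. }
    { lra. }
    { lra. }
    destruct (last_time w s0 u2 (c' / 4)) as [u1 [Hu1a [Hu1b Hu1c]]]; auto; try lra.
    { intros u Hu. apply Hwc. lra. }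
    assert (Hdur : w u2 + (- M1) * u2 <= w u1 + (- M1) * u1).
    { apply (decr (fun u => w u + (- M1) * u) (fun u => w1 u + (- M1)) u1 u2); [lra| |].
      - intros u Hu. eapply derive_ctn. apply isd_lin. apply Hd. lra.
      - intros u Hu. split. apply isd_lin. apply Hd. lra.
        destruct (Hlate u ltac:(lra)) as [_ [_ [H3 _]]]. apply absle in H3. lra. }
    assert (Hdur2 : c' / 4 / M1 <= u2 - u1).
    { apply Rmult_le_reg_r with M1; [lra|]. unfold Rdiv. rewrite Rmult_assoc, Rinv_l, Rmult_1_r by lra. nra. }
    assert (Hdrop : W u2 + kI * u2 <= W u1 + kI * u1).
    { apply (decr (fun u => W u + kI * u) (fun u => dW u + kI) u1 u2); [lra| |].
      - intros u Hu. eapply derive_ctn. apply isd_lin. apply HWd. lra.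
      - intros u Hu. split. apply isd_lin. apply HWd. lra.
        assert (Hwu1 := Hu1c u ltac:(lra)). assert (Hwu2 := Hu2c u ltac:(lra)).
        destruct (Hlate u ltac:(lra)) as [_ [_ [_ [H4 H5]]]].
        assert (HL := UU_low_left b k p g (w u) (c' / 4) (g - c' / 2) Hk Hp ltac:(lra) ltac:(lra) ltac:(lra)
           ltac:(replace (g - (g - c' / 2)) with (c' / 2) by ring; lra) ltac:(lra) ltac:(lra)).
        replace (g - (g - c' / 2)) with (c' / 2) in HL by ring. fold uI in HL.
        assert (uI * uI <= UU b k p (w u) * UU b k p (w u)) by nra.
        assert (HWe := HWest u ltac:(lra)). assert (Rmin kd kI <= kI) by apply Rmin_r.
        assert (c0 * (uI * uI) <= c0 * Dd u).
        { apply Rmult_le_compat_l. unfold c0; lra. unfold Dd. pose proof (Rle_0_sqr (w1 u)). unfold Rsqr in *. lra. }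
        unfold kI in *. lra. }
    assert (HW2 : W u2 <= sig - D0).
    { assert (H := HWs0 u1 ltac:(lra)). unfold D0.
      assert (kI * (c' / 4 / M1) <= kI * (u2 - u1)) by (apply Rmult_le_compat_l; lra).
      unfold Rdiv in *. lra. }
    assert (Hsig : sig - D0 < - sig) by (unfold sig; lra).
    assert (HWf : forall t, t >= u2 -> W t <= sig - D0).
    { apply (barrier W dW T0 u2 (sig - D0) (- sig)); auto; try lra.
      intros u Hu Hb'. destruct (Hstar u ltac:(lra)) as [[A B]|]; [apply absle in B; lra| lra]. }
    apply (Lrun u2 ltac:(lra)). intros u Hu.
    destruct (Hstar u ltac:(lra)) as [[A B]|]; auto. apply absle in B. assert (H := HWf u Hu). lra. }
  destruct ClaimB as [s [Hz1 [Hz2 Hz3]]].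
  exists s. intros t Ht. destruct (ClaimA s Hz1 Hz2 Hz3 t ltac:(lra)) as [H1 H2].
  split. lra.
  assert (H3 := HWlowg t ltac:(lra)).
  assert (Hw2 : w1 t * w1 t < eps' * eps').
  { pose proof (Rle_0_sqr (w1 t)). unfold Rsqr in *.
    assert (1/2 * (w1 t * w1 t) <= (1 - eta) * (w1 t * w1 t)) by (apply Rmult_le_compat_r; lra). lra. }
  destruct (Rlt_dec (Rabs (w1 t)) eps') as [|Hn]; auto. exfalso.
  assert (eps' * eps' <= Rabs (w1 t) * Rabs (w1 t)) by (apply Rmult_le_compat; lra).
  rewrite <- Rabs_mult, Rabs_right in H by (apply Rle_ge, Rle_0_sqr). lra.
Qed.


Lemma exp_small kap del : kap > 0 -> del > 0 -> exists T, forall t, t > T -> exp (- kap * t) <= del.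
Proof.
  intros Hk Hd. exists (- ln del / kap). intros t Ht.
  rewrite <- (exp_ln del Hd). left. apply exp_increasing.
  apply Rmult_lt_compat_l with (r := kap) in Ht; auto.
  unfold Rdiv in Ht. rewrite <- Rmult_assoc, (Rmult_comm kap), Rmult_assoc, Rinv_r, Rmult_1_r in Ht by lra. lra.
Qed.

Lemma Rpower_exp t y : Rpower (exp t) y = exp (y * t).
Proof. unfold Rpower. rewrite ln_exp. auto. Qed.

Theorem lemma6p8 (N : nat) (mu : R) (K f : R -> R) (beta k_inf p t1 : R)
  (w w' w'' : R -> R) :
  (3 <= N)%nat ->
  0 <= mu ->
  K_infty K beta k_inf ->
  F_infty N f ->
  p > p_S N beta ->
  (* w is C^2 on (t1, oo) with derivatives w', w'' *)
  (forall t, t > t1 -> is_derive w t (w' t) /\ is_derive w' t (w'' t)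
                       /\ continuous w'' t) ->
  (forall t, t > t1 -> w t > 0) ->
  (forall t, t > t1 ->
     w'' t + a_t N beta p * w' t - Rpower (A_t N beta p) (p - 1) * w t
     + L_t K beta t * Rpower (w t) p + mu * g_t f beta p t = 0) ->
  limsup_pos_finite w ->
  is_lim w p_infty (gamma_t N beta p k_inf) /\ is_lim w' p_infty 0.
Proof.
  intros HN Hmu [Hbeta [Hk [HKpos HKlim]]] [Hfpos [q [Hq [Cf [Rf HF]]]]] Hp Hder Hwpos Heq
    [[Mw [Tw HMw]] Hls].
  assert (HN3 : 3 <= INR N) by (replace 3 with (INR 3) by (simpl; ring); apply le_INR; auto).
  unfold p_S in Hp.
  assert (HpS : (INR N + 2 + 2 * beta) / (INR N - 2) - 1 = (4 + 2 * beta) / (INR N - 2)) by (field; lra).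
  assert (Hp1' : (4 + 2 * beta) / (INR N - 2) < p - 1) by lra.
  assert (H42 : 0 < (4 + 2 * beta) / (INR N - 2)) by (apply Rdiv_lt_0_compat; lra).
  assert (Hp1 : p > 1) by lra.
  set (th := theta_t beta p).
  assert (Hth : th = (2 + beta) / (p - 1)) by reflexivity.
  assert (Hth0 : 0 < th) by (rewrite Hth; apply Rdiv_lt_0_compat; lra).
  assert (Hthp : th * (p - 1) = 2 + beta) by (rewrite Hth; field; lra).
  assert (Hth2 : th < (INR N - 2) / 2).
  { assert (4 + 2 * beta < (p - 1) * (INR N - 2)).
    { assert (Hid : 4 + 2 * beta = (4 + 2 * beta) / (INR N - 2) * (INR N - 2)) by (field; lra).
      rewrite Hid. apply Rmult_lt_compat_r; lra. }
    apply Rmult_lt_reg_r with (p - 1); [lra|]. lra. }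
  set (a := a_t N beta p).
  assert (Ha : a = INR N - 2 - 2 * th) by reflexivity.
  assert (Ha0 : a > 0) by lra.
  assert (Hcc : c_t N beta p = INR N - 2 - th) by reflexivity.
  set (b := Rpower (A_t N beta p) (p - 1)).
  assert (Hb : b = th * (INR N - 2 - th)).
  { unfold b, A_t. rewrite Rpower_mult. replace (1 / (p - 1) * (p - 1)) with 1 by (field; lra).
    rewrite Hcc. apply Rpower_1. fold th. apply Rmult_lt_0_compat; lra. }
  assert (Hb0 : b > 0) by (rewrite Hb; apply Rmult_lt_0_compat; lra).
  set (g := gamma_t N beta p k_inf).
  assert (Hg0 : 0 < g) by (unfold g, gamma_t, A_t; apply Rmult_lt_0_compat; apply Rpower_pos).
  assert (Hg : Rpower g (p - 1) = b / k_inf).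
  { unfold g, gamma_t. rewrite <- Rpower_mult_distr by (unfold A_t; apply Rpower_pos).
    fold b. rewrite Rpower_mult. replace (- (1 / (p - 1)) * (p - 1)) with (Ropp 1) by (field; lra).
    rewrite Rpower_Ropp, Rpower_1 by lra. field. lra. }
  set (M := Rmax Mw 1).
  assert (HM0 : M > 0) by (unfold M; pose proof (Rmax_r Mw 1); lra).
  set (T0 := Rmax t1 Tw).
  assert (HT01 : T0 >= t1) by (unfold T0; apply Rle_ge, Rmax_l).
  assert (HT02 : T0 >= Tw) by (unfold T0; apply Rle_ge, Rmax_r).
  set (e := fun t => (L_t K beta t - k_inf) * Rpower (w t) p + mu * g_t f beta p t).
  assert (Hcore := core a b k_inf p g M T0 w w' e Ha0 Hb0 Hk Hp1 Hg0 Hg HM0).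
  assert (Hlim : forall eps', eps' > 0 -> exists T, forall t, t > T -> Rabs (w t - g) < eps' /\ Rabs (w' t) < eps').
  { apply Hcore.
    - intros t Ht. destruct (Hder t ltac:(lra)) as [H1 [H2 _]]. split; auto.
      eapply isd_eq; [exact H2|]. assert (H := Heq t ltac:(lra)). fold a b in H.
      unfold e, UU. lra.
    - intros t Ht. split. apply Hwpos; lra. apply Rle_trans with Mw. apply HMw; lra. apply Rmax_l.
    - intros eps Heps.
      set (MP := Rpower M p).
      assert (HMP : 0 < MP) by apply Rpower_pos.
      destruct (HKlim (eps / (2 * (MP + 1)))) as [R0 HR0]. { apply Rdiv_lt_0_compat; lra. }
      set (kap := q - 2 - th).
      assert (Hkap : kap > 0) by (unfold kap; lra).
      set (Cf' := Rabs Cf).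
      destruct (exp_small kap (eps / (2 * (mu * Cf' + 1))) Hkap) as [Tg HTg].
      { apply Rdiv_lt_0_compat; [lra|]. assert (0 <= mu * Cf') by (apply Rmult_le_pos; [lra| apply Rabs_pos]). lra. }
      exists (Rmax (Rmax T0 Tg) (ln (Rmax R0 (Rmax Rf 1)))).
      intros t Ht.
      pose proof (Rmax_l (Rmax T0 Tg) (ln (Rmax R0 (Rmax Rf 1)))) as Hm1.
      pose proof (Rmax_r (Rmax T0 Tg) (ln (Rmax R0 (Rmax Rf 1)))) as Hm2.
      pose proof (Rmax_l T0 Tg) as Hm3. pose proof (Rmax_r T0 Tg) as Hm4.
      pose proof (Rmax_l R0 (Rmax Rf 1)) as Hm5. pose proof (Rmax_r R0 (Rmax Rf 1)) as Hm6.
      pose proof (Rmax_l Rf 1) as Hm7. pose proof (Rmax_r Rf 1) as Hm8.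
      assert (Hex : Rmax R0 (Rmax Rf 1) < exp t).
      { rewrite <- (exp_ln (Rmax R0 (Rmax Rf 1))) by lra. apply exp_increasing. lra. }
      assert (Hep : 0 < exp t) by apply exp_pos.
      assert (HL : Rabs (L_t K beta t - k_inf) <= eps / (2 * (MP + 1))).
      { unfold L_t. specialize (HR0 (exp t) ltac:(lra) Hep).
        rewrite Rpower_exp in HR0.
        replace (exp (- beta * t) * K (exp t)) with (K (exp t) / exp (beta * t)); auto.
        replace (- beta * t) with (- (beta * t)) by ring. rewrite exp_Ropp. unfold Rdiv. ring. }
      assert (Hwt : 0 < w t <= M).
      { split. apply Hwpos; lra. apply Rle_trans with Mw. apply HMw; lra. apply Rmax_l. }
      assert (Hwp : Rpower (w t) p <= MP) by (apply pow_mono_le; lra).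
      assert (Hwp0 : 0 < Rpower (w t) p) by apply Rpower_pos.
      assert (HG : Rabs (g_t f beta p t) <= Cf' * exp (- kap * t)).
      { unfold g_t. fold th. rewrite Rabs_mult, (Rabs_right (exp _)) by (apply Rle_ge; left; apply exp_pos).
        specialize (HF (exp t) ltac:(lra) Hep). rewrite Rpower_exp in HF.
        assert (Cf * exp (- q * t) <= Cf' * exp (- q * t)) by (apply Rmult_le_compat_r; [left; apply exp_pos| apply Rle_abs]).
        apply Rle_trans with (exp ((2 + th) * t) * (Cf' * exp (- q * t))).
        apply Rmult_le_compat_l; [left; apply exp_pos| lra].
        replace (exp ((2 + th) * t) * (Cf' * exp (- q * t))) with (Cf' * (exp ((2 + th) * t) * exp (- q * t))) by ring.
        rewrite <- exp_plus. replace ((2 + th) * t + - q * t) with (- kap * t) by (unfold kap; ring). lra. }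
      assert (HTg' := HTg t ltac:(lra)).
      unfold e. eapply Rle_trans. apply Rabs_triang.
      rewrite !Rabs_mult, (Rabs_right (Rpower _ _)) by lra. rewrite (Rabs_right mu) by lra.
      assert (Rabs (L_t K beta t - k_inf) * Rpower (w t) p <= eps / (2 * (MP + 1)) * MP).
      { apply Rmult_le_compat; auto using Rabs_pos; lra. }
      assert (eps / (2 * (MP + 1)) * MP <= eps / 2).
      { unfold Rdiv. rewrite Rinv_mult. assert (0 < / (MP + 1)) by (apply Rinv_0_lt_compat; lra).
        assert (/ (MP + 1) * MP <= 1).
        { apply Rmult_le_reg_l with (MP + 1); [lra|]. rewrite <- Rmult_assoc, Rinv_r by lra. lra. }
        assert (0 < eps * / 2) by lra. nra. }
      assert (mu * Rabs (g_t f beta p t) <= mu * (Cf' * (eps / (2 * (mu * Cf' + 1))))).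
      { apply Rmult_le_compat_l; auto. apply Rle_trans with (1 := HG). apply Rmult_le_compat_l; auto. apply Rabs_pos. }
      assert (mu * (Cf' * (eps / (2 * (mu * Cf' + 1)))) <= eps / 2).
      { assert (0 <= mu * Cf') by (apply Rmult_le_pos; [lra| apply Rabs_pos]).
        replace (mu * (Cf' * (eps / (2 * (mu * Cf' + 1))))) with (eps / 2 * (mu * Cf' / (mu * Cf' + 1))) by (field; lra).
        assert (mu * Cf' / (mu * Cf' + 1) <= 1).
        { apply Rmult_le_reg_l with (mu * Cf' + 1); [lra|]. unfold Rdiv. rewrite <- Rmult_assoc, (Rmult_comm (mu*Cf'+1)), Rmult_assoc, Rinv_r by lra. lra. }
        assert (0 < eps / 2) by lra. nra. }
      lra.
    - exact Hls. }
  split.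
  - apply is_lim_spec. intros eps. destruct (Hlim eps (cond_pos eps)) as [T HT].
    exists T. intros t Ht. apply HT; auto.
  - apply is_lim_spec. intros eps. destruct (Hlim eps (cond_pos eps)) as [T HT].
    exists T. intros t Ht. rewrite Rminus_0_r. apply HT; auto.
Qed.
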